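(* Let $n\ge 1$, let $B=(B_{ij})$ be a symmetric $n\times n$ matrix over $\mathbb{F}_2$ with zero diagonal, and let $f(x)=\sum_{i<j}B_{ij}x_ix_j$ be the associated boolean function on $\mathbb{Z}_2^n$. Let $\mathcal{C}_B\subseteq\mathbb{F}_2^{2n}$ be the code spanned over $\mathbb{F}_2$ by the rows of the $n\times 2n$ matrix $(B\mid I_n)$. Then the EPC distance of $f$ equals the binary distance $d_b$ of $\mathcal{C}_B$.
   Context: For $x\in\mathbb{Z}_2^n$, $w(x)$ is the Hamming weight. For $x,y\in\mathbb{Z}_2^n$, $x\preceq y$ means $x_j\le y_j$ for all $j$; $\bar a$ is the complement of $a$ ($\bar a_j=a_j+1\bmod 2$); $V_a=\{x: x\preceq a\}$ and, for $k\preceq\mu$, $k+V_{\bar\mu}=\{k+x: x\preceq\bar\mu\}$. Exponents of $(-1)$ are computed mod 2. Binary weight and binary distance: a vector $(\alpha,\beta)\in\mathbb{F}_2^{2n}$ (with $\alpha,\beta\in\mathbb{F}_2^n$) is viewed as a length-$n$ word whose $j$-th letter is the pair $(\alpha_j,\beta_j)$; its binary weight is $w_b(\alpha,\beta)=w_x+2w_y+w_z$, where $w_x,w_y,w_z$ count the indices $j$ with $(\alpha_j,\beta_j)=(1,0)$, $(1,1)$, $(0,1)$ respectively; equivalently $w_b(\alpha,\beta)=w(\alpha)+w(\beta)$. The binary distance $d_b$ of a code is the minimum binary weight of its nonzero codewords. EPC distance: for a boolean function $f$ and $a,k,\mu\in\mathbb{Z}_2^n$ with $k\preceq\mu$, the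 fixed-extended autocorrelation is $v(a,k,\mu)=\sum_{x\in k+V_{\bar\mu}}(-1)^{f(x)+f(x+a)}$. For integers $l\ge1$, $q\ge0$, $f$ satisfies EPC($l$) of order $q$ if $v(a,k,\mu)=0$ for all $a,k,\mu$ with $k\preceq\mu$, $1\le w(a)\le l$ and $0\le w(\mu)\le q$. The EPC distance of $f$ is the largest integer $d\ge1$ such that $f$ satisfies EPC($l$) of order $q$ for all $l\ge1,q\ge0$ with $l+q<d$ (equivalently, the minimum of $w(a)+w(\mu)$ over all $a\neq0$, $k\preceq\mu$ with $v(a,k,\mu)\neq0$). *)

(* Defs.v *)
From HB Require Import structures.
From mathcomp Require Import all_boot all_order all_algebra.
Set Implicit Arguments. Unset Strict Implicit. Unset Printing Implicit Defensive.
Import Order.TTheory GRing.Theory Num.Theory.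
Local Open Scope ring_scope.

Notation vecF2 n := 'rV['F_2]_n.

Definition hw n (x : vecF2 n) : nat := #|[set j : 'I_n | x 0 j != 0]|.

Definition prec n (x y : vecF2 n) : bool :=
  [forall j : 'I_n, (x 0 j != 0) ==> (y 0 j != 0)].

Definition compl n (a : vecF2 n) : vecF2 n := \row_j (a 0 j + 1).

Definition Vset n (a : vecF2 n) : {set vecF2 n} := [set x | prec x a].

(* (-1)^e for e in F_2 (exponent taken mod 2) *)
Definition sgn1 (e : 'F_2) : int := if e == 0 then 1 else -1.

Definition quadf n (B : 'M['F_2]_n) (x : vecF2 n) : 'F_2 :=
  \sum_(i < n) \sum_(j < n | (i < j)%N) B i j * x 0 i * x 0 j.

Definition fea n (f : vecF2 n -> 'F_2) (a k mu : vecF2 n) : int :=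
  \sum_(x in [set k + y | y in Vset (compl mu)]) sgn1 (f x + f (x + a)).

Definition EPC n (f : vecF2 n -> 'F_2) (l q : nat) : Prop :=
  forall a k mu : vecF2 n, prec k mu ->
    (1 <= hw a <= l)%N -> (hw mu <= q)%N -> fea f a k mu = 0.

Definition EPC_below n (f : vecF2 n -> 'F_2) (d : nat) : Prop :=
  forall l q : nat, (1 <= l)%N -> (l + q < d)%N -> EPC f l q.

Definition is_EPC_distance n (f : vecF2 n -> 'F_2) (d : nat) : Prop :=
  [/\ (1 <= d)%N, EPC_below f d &
      forall d' : nat, (1 <= d')%N -> EPC_below f d' -> (d' <= d)%N].

Definition wb n (c : vecF2 (n + n)) : nat := (hw (lsubmx c) + hw (rsubmx c))%N.

Definition codeB n (B : 'M['F_2]_n) : {set vecF2 (n + n)} :=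
  [set c : vecF2 (n + n) | (c <= row_mx B 1%:M)%MS].

Definition is_binary_distance n (C : {set vecF2 (n + n)}) (d : nat) : Prop :=
  (exists2 c, (c \in C) && (c != 0) & wb c = d) /\
  (forall c, c \in C -> c != 0 -> (d <= wb c)%N).

(* Main.v *)
Require Import Defs.
From mathcomp Require Import all_boot all_order all_algebra ring zify.
Set Implicit Arguments. Unset Strict Implicit. Unset Printing Implicit Defensive.
Import Order.TTheory GRing.Theory Num.Theory.
Local Open Scope ring_scope.

Lemma F2P (x : 'F_2) : x = 0 \/ x = 1.
Proof. case: x => [[|[|m]] Hm]; [left|right|]; try by apply/val_inj. by []. Qed.

Lemma F2_double (x : 'F_2) : x + x = 0.
Proof. by case: (F2P x) => ->; apply/val_inj. Qed.

Lemma F2_neq0 (x : 'F_2) : (x != 0) = (x == 1).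
Proof. by case: (F2P x) => ->. Qed.

Lemma sgn1D (x y : 'F_2) : sgn1 (x + y) = sgn1 x * sgn1 y.
Proof. by case: (F2P x) => ->; case: (F2P y) => ->. Qed.

Lemma sgn1_neq0 x : sgn1 x != 0.
Proof. by case: (F2P x) => ->. Qed.

Lemma sgn1D1 (x : 'F_2) : sgn1 (x + 1) = - sgn1 x.
Proof. by case: (F2P x) => ->. Qed.

Definition Tf n (B : 'M['F_2]_n) (x y : vecF2 n) : 'F_2 :=
  \sum_(i < n) \sum_(j < n | (i < j)%N) B i j * x 0 i * y 0 j.
Definition Lf n (u x : vecF2 n) : 'F_2 := \sum_(i < n) x 0 i * u 0 i.

Lemma TfD n (B : 'M['F_2]_n) x a :
  Tf B (x + a) (x + a) = Tf B x x + Tf B x a + Tf B a x + Tf B a a.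
Proof.
rewrite /Tf -!big_split /=; apply: eq_bigr => i _.
rewrite -!big_split /=; apply: eq_bigr => j _.
rewrite !mxE; ring.
Qed.

Lemma Tf_sym n (B : 'M['F_2]_n) x a : B^T = B -> (forall i, B i i = 0) ->
  Tf B x a + Tf B a x = Lf (a *m B) x.
Proof.
move=> Bs Bd.
have BT i j : B j i = B i j by rewrite -{1}Bs mxE.
rewrite /Lf /Tf.
transitivity (\sum_(i < n) \sum_(j < n) B i j * x 0 i * a 0 j).
  rewrite [in X in X + _ = _](eq_bigr (fun i : 'I_n => \sum_(j < n) if (i < j)%N then
     B i j * x 0 i * a 0 j else 0)); last by move=> i _; rewrite big_mkcond.
  rewrite [in X in _ + X = _](eq_bigr (fun i : 'I_n => \sum_(j < n) if (i < j)%N then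
     B i j * a 0 i * x 0 j else 0)); last by move=> i _; rewrite big_mkcond.
  rewrite [in X in _ + X = _]exchange_big /= -big_split /=.
  apply: eq_bigr => i _; rewrite -big_split /=; apply: eq_bigr => j _.
  case: (ltngtP i j) => Hij.
  - by rewrite addr0.
  - by rewrite add0r BT; ring.
  - have -> : j = i by apply/val_inj.
    by rewrite Bd !mul0r addr0.
apply: eq_bigr => i _; rewrite mxE big_distrr /=; apply: eq_bigr => j _.
by rewrite BT; ring.
Qed.

Lemma quadf_add n (B : 'M['F_2]_n) x a : B^T = B -> (forall i, B i i = 0) ->
  quadf B x + quadf B (x + a) = quadf B a + Lf (a *m B) x.
Proof.
move=> Bs Bd.
have -> : quadf B = fun y => Tf B y y by [].
rewrite TfD -(Tf_sym _ _ Bs Bd).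
have := F2_double (Tf B x x).
move=> H.
rewrite !addrA H add0r; ring.
Qed.

Lemma Lf_add n (u x y : vecF2 n) : Lf u (x + y) = Lf u x + Lf u y.
Proof. rewrite /Lf -big_split; apply: eq_bigr => i _; by rewrite mxE mulrDl. Qed.

Lemma sum_V_zero n (m u : vecF2 n) j : m 0 j != 0 -> u 0 j != 0 ->
  \sum_(y in Vset m) sgn1 (Lf u y) = 0.
Proof.
move=> mj uj.
set e : vecF2 n := delta_mx 0 j.
set S := \sum_(y in Vset m) _.
have inj : injective (fun y : vecF2 n => y + e) by apply: addIr.
have HS : S = - S.
  rewrite {1}/S (reindex_inj inj) /= /S -sumrN.
  apply: eq_big => y.
    rewrite !inE /prec; apply: eq_forallb => i.
    rewrite !mxE; case: (eqVneq i j) => [->|nij]; first by rewrite mj !implybT.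
    by rewrite addr0.
  move=> _; rewrite Lf_add.
  have -> : Lf u e = 1.
    rewrite /Lf (bigD1 j) //= big1 ?addr0.
      by rewrite !mxE !eqxx mul1r; move: uj; rewrite F2_neq0 => /eqP.
    by move=> i nij; rewrite !mxE (negbTE nij) andbF mul0r.
  by rewrite sgn1D1.
have : S + S = 0 by rewrite {1}HS addNr.
by move/eqP; rewrite -mulr2n mulrn_eq0 /= => /eqP.
Qed.

Lemma sum_V_pos n (m u : vecF2 n) : (forall j, m 0 j != 0 -> u 0 j = 0) ->
  \sum_(y in Vset m) sgn1 (Lf u y) != 0.
Proof.
move=> H.
rewrite (eq_bigr (fun _ => 1)).
  rewrite sumr_const pnatr_eq0 -lt0n card_gt0; apply/set0Pn; exists 0.
  by rewrite inE /prec; apply/forallP => i; rewrite mxE eqxx.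
move=> y; rewrite inE => /forallP Hy.
rewrite /Lf big1 //= => i _.
case: (eqVneq (y 0 i) 0) => [->|yi]; first by rewrite mul0r.
by rewrite H ?mulr0 //; move: (Hy i); rewrite yi.
Qed.

Lemma fea_eq n (B : 'M['F_2]_n) a k mu : B^T = B -> (forall i, B i i = 0) ->
  fea (quadf B) a k mu =
  sgn1 (quadf B a + Lf (a *m B) k) * \sum_(y in Vset (compl mu)) sgn1 (Lf (a *m B) y).
Proof.
move=> Bs Bd.
rewrite /fea big_imset /=; last by move=> y z _ _; apply: addrI.
rewrite mulr_sumr; apply: eq_bigr => y _.
by rewrite quadf_add // -sgn1D -addrA -Lf_add.
Qed.

Lemma fea_neq0 n (B : 'M['F_2]_n) a k mu : B^T = B -> (forall i, B i i = 0) ->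
  (fea (quadf B) a k mu != 0) = prec (a *m B) mu.
Proof.
move=> Bs Bd; rewrite fea_eq // mulf_eq0 negb_or sgn1_neq0 /=.
case: (boolP (prec (a *m B) mu)) => [/forallP P|].
  apply/negP/negP/sum_V_pos => j; rewrite mxE => cj.
  have m0 : mu 0 j = 0.
    by case: (F2P (mu 0 j)) cj => // ->; rewrite F2_double eqxx.
  by case: (F2P ((a *m B) 0 j)) => // H1; move: (P j); rewrite H1 m0 oner_eq0 eqxx.
move=> /forallPn [j]; rewrite negb_imply => /andP [uj mj].
apply/eqP/(sum_V_zero (j:=j)) => //.
by rewrite mxE; move: mj; rewrite negbK => /eqP ->; rewrite add0r oner_eq0.
Qed.

Lemma hw_eq0 n (x : vecF2 n) : (hw x == 0)%N = (x == 0).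
Proof.
rewrite /hw cards_eq0; apply/eqP/eqP => [H|->].
  apply/rowP => j; rewrite mxE; apply/eqP; apply: contraT => xj.
  by move/setP: H => /(_ j); rewrite !inE xj.
by apply/setP => j; rewrite !inE mxE eqxx.
Qed.

Lemma hw_prec n (x y : vecF2 n) : prec x y -> (hw x <= hw y)%N.
Proof.
move=> /forallP H; apply: subset_leq_card; apply/subsetP => j; rewrite !inE.
by move=> xj; move: (H j); rewrite xj.
Qed.

Lemma prec_refl n (x : vecF2 n) : prec x x.
Proof. by apply/forallP => j; rewrite implybb. Qed.

Lemma prec0 n (x : vecF2 n) : prec 0 x.
Proof. by apply/forallP => j; rewrite mxE eqxx. Qed.

Theorem theorem4p1 (n : nat) (B : 'M['F_2]_n) :
  (0 < n)%N -> B^T = B -> (forall i, B i i = 0) ->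
  exists d : nat, is_EPC_distance (quadf B) d /\ is_binary_distance (codeB B) d.
Proof.
move=> n0 Bs Bd.
pose P := fun d => [exists a : vecF2 n, (a != 0) && (hw (a *m B) + hw a == d)%N].
have exP : exists d, P d.
  exists (hw (delta_mx ord0 (Ordinal n0) *m B) + hw (delta_mx ord0 (Ordinal n0) : vecF2 n))%N.
  apply/existsP; exists (delta_mx ord0 (Ordinal n0)); rewrite eqxx andbT.
  apply/eqP => /rowP /(_ (Ordinal n0)); rewrite !mxE !eqxx /= => /eqP.
  by rewrite oner_eq0.
case: (ex_minnP exP) => d Pd dmin.
move/existsP: Pd => [a0 /andP [a0nz /eqP ha0]].
have a0pos : (0 < hw a0)%N by rewrite lt0n hw_eq0.
exists d; split; first split.
- by rewrite -ha0 addn_gt0 a0pos orbT.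
- move=> l q l1 lqd a k mu kmu /andP[ha1 hal] hmu.
  apply/eqP; apply: contraT; rewrite fea_neq0 // => pr.
  have anz : a != 0 by rewrite -hw_eq0 -lt0n.
  have : (d <= hw (a *m B) + hw a)%N.
    by apply: dmin; apply/existsP; exists a; rewrite anz eqxx.
  have := hw_prec pr; lia.
- move=> d' d'1 E; rewrite leqNgt; apply/negP => dd'.
  have := E (hw a0) (hw (a0 *m B)) a0pos _ a0 0 (a0 *m B) (prec0 _) _ (leqnn _).
  have -> : (hw a0 + hw (a0 *m B) < d')%N by rewrite addnC ha0.
  rewrite a0pos leqnn => /(_ isT isT) /eqP.
  by rewrite -[_ == 0]negbK fea_neq0 // prec_refl.
split.
- exists (a0 *m row_mx B 1%:M).
    rewrite inE submxMl /=; apply: contra a0nz => /eqP H.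
    by move: (congr1 rsubmx H); rewrite mul_mx_row row_mxKr mulmx1 => ->; rewrite linear0.
  by rewrite /wb mul_mx_row row_mxKl row_mxKr mulmx1 ha0.
- move=> c; rewrite inE => /submxP [D ->] cnz.
  rewrite /wb mul_mx_row row_mxKl row_mxKr mulmx1.
  apply: dmin; apply/existsP; exists D; rewrite eqxx andbT.
  by apply: contra cnz => /eqP ->; rewrite mul0mx.
Qed.
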